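(* Let $E$ be a uniformly convex Banach space. For every $\varepsilon>0$ there is $\delta>0$ such that for all continuous isometric linear representations $\rho:\mathbb{R}\to\mathrm{O}(E)$, all $a\in\mathbb{R}$ and all $\xi\in E$: if $\|\rho(\gamma_a)\xi\|\ge(1-\delta)\|\xi\|$, then $\max_{|t|\le e^a}\|\rho(t)\xi-\xi\|\le\varepsilon\|\xi\|$.
   Context: $\gamma_a$ is the centered Gaussian probability measure on $\mathbb{R}$ with variance $e^{2a}$, and $\rho(\gamma_a)\xi=\int\rho(t)\xi\,d\gamma_a(t)$. $\mathrm{O}(E)$ is the group of linear isometries of $E$. Uniform convexity: for each $\varepsilon\in(0,2]$ there is $\delta>0$ with $\|(\xi+\eta)/2\|\le1-\delta$ for unit vectors with $\|\xi-\eta\|\ge\varepsilon$. *)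

(* Defs.v *)
From HB Require Import structures.
From mathcomp Require Import all_boot all_order all_algebra.
From mathcomp Require Import all_classical all_reals all_analysis.
Set Implicit Arguments. Unset Strict Implicit. Unset Printing Implicit Defensive.
Import Order.TTheory GRing.Theory Num.Theory.
Import numFieldNormedType.Exports.
Local Open Scope classical_set_scope.
Local Open Scope ring_scope.

Definition uniformly_convex {R : realType} (E : normedModType R) : Prop :=
  forall eps : R, 0 < eps -> eps <= 2 ->
    exists2 delta : R, 0 < delta &
      forall x y : E, `|x| = 1 -> `|y| = 1 -> eps <= `|x - y| ->
        `|(2^-1) *: (x + y)| <= 1 - delta.

(* rho : R -> O(E) is a continuous isometric linear representation:
   each rho t is a linear isometry of E, rho is a group homomorphism
   (hence each rho t is invertible, i.e. lies in O(E)), and rho is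
   continuous (strong operator topology: t |-> rho t xi is continuous). *)
Definition isometric_rep {R : realType} (E : normedModType R)
    (rho : R -> E -> E) : Prop :=
  [/\ forall t, linear (rho t),
      forall t x, `|rho t x| = `|x|,
      forall x, rho 0 x = x,
      forall s t x, rho (s + t) x = rho s (rho t x)
    & forall x, continuous (fun t => rho t x)].

(* gamma_a : centered Gaussian probability measure on R with variance
   e^(2a), i.e. standard deviation e^a. *)
Definition gamma {R : realType} (a : R) := normal_prob 0 (expR a).

(* v is the (E-valued) integral of f against gamma_a, characterised weakly:
   every continuous linear functional commutes with the integral.  For a
   bounded continuous f (as t |-> rho t xi) the Bochner integral
   int f d gamma_a exists and satisfies this; by Hahn-Banach it is the
   unique such vector. *)
Definition gauss_integral_of {R : realType} (E : normedModType R)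
    (a : R) (f : R -> E) (v : E) : Prop :=
  forall l : E -> R, linear (l : E -> R^o) -> continuous l ->
    (\int[gamma a]_t (l (f t))%:E)%E = (l v)%:E.

(* Main.v *)
Require Import Defs.
From HB Require Import structures.
From mathcomp Require Import all_boot all_order all_algebra.
From mathcomp Require Import all_classical all_reals all_analysis.
From mathcomp Require Import measurable_realfun.
From mathcomp.algebra_tactics Require Import ring lra.
Import Order.TTheory GRing.Theory Num.Theory.
Import numFieldNormedType.Exports.
Local Open Scope classical_set_scope.
Local Open Scope ring_scope.
Section HahnBanach.
Set Implicit Arguments.
Unset Strict Implicit.
Variables (R : realType) (E : normedModType R).

Definition pgraph (G : set (E * R)) : Prop :=
  (forall x r s, G (x, r) -> G (x, s) -> r = s) /\
  (forall a x r y s, G (x, r) -> G (y, s) -> G (a *: x + y, a * r + s)) /\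
  (forall x r, G (x, r) -> r <= `|x|).

Lemma pgraph0 G x r : pgraph G -> G (x, r) -> G (0, 0).
Proof.
move=> [_ [Hc _]] Gx; have := Hc (-1) x r x r Gx Gx.
by rewrite scaleN1r addNr mulN1r addNr.
Qed.

Lemma pgraphZ G a x r : pgraph G -> G (x, r) -> G (a *: x, a * r).
Proof.
move=> HG Gx; have G0 := pgraph0 HG Gx; case: HG => [_ [Hc _]].
by have := Hc a x r 0 0 Gx G0; rewrite !addr0.
Qed.

Lemma pgraphD G x r y s : pgraph G -> G (x, r) -> G (y, s) -> G (x + y, r + s).
Proof. by move=> [_ [Hc _]] Gx Gy; have := Hc 1 x r y s Gx Gy; rewrite scale1r mul1r. Qed.

Variable v : E.

Definition PP (G : set (E * R)) := G = set0 \/ (pgraph G /\ G (v, `|v|)).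

Lemma PP_chain (F : set (set (E * R))) : F `<=` PP -> total_on F subset ->
  PP (\bigcup_(X in F) X).
Proof.
move=> FP tot.
case: (pselect (exists X, F X /\ X !=set0)) => [[X0 [FX0 [p0 Xp0]]]|nex]; last first.
  left; apply/seteqP; split => // p [X FX Xp]; apply: nex; exists X; split => //.
  by exists p.
right.
have two : forall p q, (\bigcup_(X in F) X) p -> (\bigcup_(X in F) X) q ->
    exists X, [/\ F X, X p, X q & pgraph X].
  move=> p q [X FX Xp] [Y FY Yq]; case: (tot X Y FX FY) => [XY|YX].
  - exists Y; split => //; first exact: XY.
    by case: (FP Y FY) => [Y0|[]//]; move: Yq; rewrite Y0.
  - exists X; split => //; first exact: YX.
    by case: (FP X FX) => [Xe|[]//]; move: Xp; rewrite Xe.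
split; [split; [|split]|].
- move=> x r s Hr Hs; have [X [FX Xr Xs [Hf _]]] := two _ _ Hr Hs.
  exact: Hf Xr Xs.
- move=> a x r y s Hr Hs; have [X [FX Xr Xs [_ [Hc _]]]] := two _ _ Hr Hs.
  by exists X => //; exact: Hc.
- move=> x r Hr; have [X [FX Xr _ [_ [_ Hb]]]] := two _ _ Hr Hr.
  exact: Hb.
- case: (FP X0 FX0) => [X00|[_ Xv]]; first by move: Xp0; rewrite X00.
  by exists X0.
Qed.

Lemma HB_exists : exists l : E -> R,
  [/\ forall a x y, l (a *: x + y) = a * l x + l y,
      forall x, `|l x| <= `|x| & l v = `|v|].
Proof.
have [A [PA Amax]] := Zorn_bigcup PP_chain.
pose G0 := [set p : E * R | exists t : R, p = (t *: v, t * `|v|)].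
have PG0 : pgraph G0 /\ G0 (v, `|v|).
  split; [split; [|split]|].
  - move=> x r s [t [-> ->]] [t' [E3 ->]].
    have : (t - t') *: v = 0 by rewrite scalerBl E3 subrr.
    move/eqP; rewrite scaler_eq0 => /orP[|/eqP ->]; last by rewrite normr0 !mulr0.
    by rewrite subr_eq0 => /eqP ->.
  - move=> a x r y s [t [-> ->]] [t' [-> ->]].
    exists (a * t + t'); congr pair; first by rewrite scalerA scalerDl.
    by rewrite mulrA mulrDl.
  - move=> x r [t [-> ->]].
    by rewrite normrZ ler_wpM2r // ler_norm.
  - by exists 1; rewrite scale1r mul1r.
case: PA => [A0|[pA Av]].
  exfalso; apply: (Amax G0); last by right.
  rewrite A0; split => // /(_ (v, `|v|)); case: PG0 => _ Hv /(_ Hv).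
  by [].
have A00 : A (0, 0) := pgraph0 pA Av.
have tot : forall x, exists r, A (x, r).
  move=> x0; case: (pselect (exists r, A (x0, r))) => // nx0; exfalso.
  pose S := [set z | exists y s, A (y, s) /\ z = s - `|y - x0|].
  have Sub : forall x r y s, A (x, r) -> A (y, s) -> s - `|y - x0| <= `|x + x0| - r.
    move=> x r y s Ax Ay.
    have Hxy := pgraphD pA Ax Ay.
    have := pA.2.2 _ _ Hxy.
    have -> : x + y = (x + x0) + (y - x0) by rewrite addrACA subrr addr0.
    move=> H; have := ler_normD (x + x0) (y - x0); lra.
  have S0 : S !=set0 by exists (0 - `|0 - x0|); exists 0, 0; split.
  have Sub' : ubound S (`|0 + x0| - 0).
    by move=> z [y [s [Ay ->]]]; exact: Sub A00 Ay.
  have hs : has_sup S by split => //; exists (`|0 + x0| - 0).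
  pose c := sup S.
  pose B := [set p : E * R | exists x r t, A (x, r) /\ p = (x + t *: x0, r + t * c)].
  have AB : A `<` B.
    split.
      by move=> [x r] Ax; exists x, r, 0; rewrite scale0r mul0r !addr0.
    move=> BA; have : B (x0, c).
      by exists 0, 0, 1; split => //; rewrite add0r scale1r mul1r add0r.
    by move/BA => Ax0; apply: nx0; exists c.
  apply: (Amax B AB); right.
  split; [split; [|split]|]; last first.
  - by exists v, `|v|, 0; rewrite scale0r mul0r !addr0.
  - move=> x r [x1 [r1 [t [A1 E1]]]]; case: E1 => -> ->.
    have Hb := pA.2.2.
    case: (ltgtP t 0) => [tlt0|tgt0|->]; last first.
    + by rewrite scale0r mul0r !addr0; exact: Hb.
    + have A' := pgraphZ t^-1 pA A1.
      have ub : ubound S (`|t^-1 *: x1 + x0| - t^-1 * r1).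
        by move=> z [y [s [Ay ->]]]; exact: Sub A' Ay.
      have := ge_sup S0 ub; rewrite -/c => Hc.
      have : t * c <= t * (`|t^-1 *: x1 + x0| - t^-1 * r1) by rewrite ler_wpM2l // ltW.
      have -> : t * (`|t^-1 *: x1 + x0| - t^-1 * r1) = `|x1 + t *: x0| - r1.
        rewrite mulrBr mulrA mulfV ?gt_eqF // mul1r.
        rewrite -{1}(gtr0_norm tgt0) -normrZ scalerDr scalerA mulfV ?gt_eqF //.
        by rewrite scale1r.
      lra.
    + have tp : 0 < - t by rewrite oppr_gt0.
      have A' := pgraphZ (- t)^-1 pA A1.
      have inS : S ((- t)^-1 * r1 - `|(- t)^-1 *: x1 - x0|) by exists ((- t)^-1 *: x1), ((- t)^-1 * r1).
      have := sup_upper_bound hs inS; rewrite -/c => Hc.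
      have : (- t) * ((- t)^-1 * r1 - `|(- t)^-1 *: x1 - x0|) <= (- t) * c.
        by rewrite ler_wpM2l // ltW.
      have -> : (- t) * ((- t)^-1 * r1 - `|(- t)^-1 *: x1 - x0|) = r1 - `|x1 + t *: x0|.
        rewrite mulrBr mulrA mulfV ?gt_eqF // mul1r.
        rewrite -{1}(gtr0_norm tp) -normrZ scalerBr scalerA mulfV ?gt_eqF //.
        by rewrite scale1r scaleNr opprK.
      lra.
  - move=> a x r y s [x1 [r1 [t1 [A1 E1]]]] [x2 [r2 [t2 [A2 E2]]]].
    case: E1 => -> ->; case: E2 => -> ->.
    exists (a *: x1 + x2), (a * r1 + r2), (a * t1 + t2); split; first exact: pA.2.1.
    congr pair; last by ring.
    by rewrite scalerDr scalerA addrACA scalerDl.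
  - move=> x r s [x1 [r1 [t1 [A1 E1]]]] [x2 [r2 [t2 [A2 E2]]]].
    case: E1 => ex1 ->; case: E2 => ex2 ->.
    have tt : t1 = t2.
      apply/eqP; apply: contraT => neq; exfalso; apply: nx0.
      have A12 : A (x1 - x2, r1 - r2).
        by have := pgraphD pA A1 (pgraphZ (-1) pA A2); rewrite scaleN1r mulN1r.
      have A3 := pgraphZ (t2 - t1)^-1 pA A12.
      exists ((t2 - t1)^-1 * (r1 - r2)).
      have -> : x0 = (t2 - t1)^-1 *: (x1 - x2) => //.
      have -> : x1 - x2 = (t2 - t1) *: x0.
        have e1 : x1 = x - t1 *: x0 by rewrite ex1 addrK.
        have e2 : x2 = x - t2 *: x0 by rewrite ex2 addrK.
        by rewrite e1 e2 scalerBl opprB addrC addrA addrNK.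
      rewrite scalerA mulVf ?scale1r // subr_eq0 eq_sym //.
    move: ex1 ex2; rewrite -tt => ex1 ex2.
    have ex : x1 = x2 by apply: (addIr (t1 *: x0)); rewrite -ex1 -ex2.
    move: A2; rewrite -ex => A2.
    by rewrite (pA.1 _ _ _ A1 A2).
have [l Hl] := choice tot.
exists l; split.
- move=> a x y; have := pA.2.1 a x (l x) y (l y) (Hl x) (Hl y).
  by move/(pA.1 _ _ _ (Hl (a *: x + y))).
- move=> x; rewrite ler_norml; apply/andP; split; last exact: pA.2.2 _ _ (Hl x).
  have := pA.2.2 _ _ (pgraphZ (-1) pA (Hl x)).
  rewrite scaleN1r normrN mulN1r; lra.
- exact: pA.1 _ _ _ (Hl v) Av.
Qed.

End HahnBanach.
Section Shift.
Variables (R : realType) (t : R).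
Local Notation mu := (@lebesgue_measure R).

Lemma lebesgue_shift (A : set R) : measurable A ->
  mu ((fun x => x + t) @^-1` A) = mu A.
Proof.
move=> mA.
have -> : mu ((fun x => x + t) @^-1` A) =
   pushforward mu ((fun x => x + t) : _ -> measurableTypeR R) A by [].
have mf : measurable_fun [set: measurableTypeR R] ((fun x => x + t) : _ -> measurableTypeR R).
  by apply: measurable_realfun.measurable_funD.
apply/esym/lebesgue_measure_unique => //= _ [[a b]] _ <-.
rewrite /pushforward.
have -> : (fun x => x + t) @^-1` `]a, b]%classic = `]a - t, b - t]%classic.
  apply/seteqP; split => y /=; rewrite !in_itv /= => /andP[h1 h2]; apply/andP; split; lra.
rewrite !lebesgue_measure_itv /= !lte_fin ltrD2r.
by case: ifP => // _; rewrite -EFinB; congr EFin; ring.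
Qed.
End Shift.
Section Key.
Variable R : realType.
Local Notation mu := (@lebesgue_measure R).

Lemma pdf_lb (s x : R) : 0 < s -> `|x| <= 2 * s ->
  expR (-2) / (4 * s) <= normal_pdf 0 s x.
Proof.
move=> s0 xs.
have s4 : 0 < 4 * s by apply: mulr_gt0.
have s2 : 0 < s ^+ 2 by rewrite exprn_gt0.
rewrite normal_pdfE ?gt_eqF //= /normal_peak /normal_fun subr0.
have pi4 : pi < 4 :> R by have := @pihalf_lt2 R; lra.
have pi0 : 0 < pi :> R := pi_gt0 R.
have h1 : Num.sqrt (s ^+ 2 * pi *+ 2) <= 4 * s.
  rewrite -[X in _ <= X](gtr0_norm s4) -sqrtr_sqr ler_sqrt ?sqr_ge0 //.
  rewrite -mulr_natr; nra.
have h1' : 0 < Num.sqrt (s ^+ 2 * pi *+ 2).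
  rewrite sqrtr_gt0 -mulr_natr; nra.
have h2 : expR (-2) <= expR (- x ^+ 2 / (s ^+ 2 *+ 2)).
  rewrite ler_expR -mulr_natr mulNr lerN2 ler_pdivrMr; last by nra.
  have : x ^+ 2 <= (2 * s) ^+ 2.
    by move: xs; rewrite ler_norml => /andP[a b]; nra.
  nra.
rewrite [leLHS]mulrC; apply: ler_pM.
- by rewrite invr_ge0 ltW.
- exact: expR_ge0.
- by rewrite lef_pV2 ?posrE.
- exact: h2.
Qed.


Lemma key_pair (s N eta delta r : R) (f : R -> R) :
  0 < s -> 0 < N -> 0 < eta -> 0 <= delta ->
  delta <= eta * (expR (-2) / 4) / 2 ->
  continuous f -> (forall x, `|f x| <= N) ->
  (\int[normal_prob 0 s]_t (f t)%:E)%E = r%:E -> (1 - delta) * N <= r ->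
  forall t0, `|t0| <= s ->
  exists x, (1 - eta) * N <= f x /\ (1 - eta) * N <= f (x + t0).
Proof.
move=> s0 N0 e0 d0 de cf fN Hint Hr t0 t0s.
pose B := f @^-1` `]-oo, (1 - eta) * N[.
have mf : measurable_fun setT f := continuous_measurable_fun cf.
have mB : measurable B.
  by rewrite /B -[X in measurable X]setTI; apply: mf.
have mfE : measurable_fun setT (EFin \o f) by apply/measurable_EFinP.
have intf : (normal_prob 0 s).-integrable setT (EFin \o f).
  apply: measurable_bounded_integrable => //.
  - by apply: le_lt_trans (probability_le1 _ measurableT) (ltry _).
  - exists N; split; first exact: num_real.
    by move=> M NM x _ /=; exact: le_trans (fN x) (ltW NM).
have intc : (normal_prob 0 s).-integrable setT (EFin \o cst N).
  exact: finite_measure_integrable_cst.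
have H1 : (\int[normal_prob 0 s]_t ((N - f t)%:E) = (N - r)%:E)%E.
  have HB := @integralB_EFin _ _ _ (normal_prob 0 s) setT (cst N) f measurableT intc intf.
  under eq_integral do rewrite EFinB.
  apply: eq_trans HB _.
  rewrite Hint EFinB; congr (_ - _)%E.
  have := integral_cst (normal_prob 0 s) (@measurableT _ R) N%:E.
  move=> ->; rewrite -[RHS]mule1; congr (_ * _)%E.
  exact: probability_setT.
have H2 : (\int[normal_prob 0 s]_t ((eta * N * \1_B t)%:E) <=
           \int[normal_prob 0 s]_t ((N - f t)%:E))%E.
  apply: ge0_le_integral => //.
  - by move=> x _; rewrite lee_fin mulr_ge0 // mulr_ge0 // ltW.
  - apply/measurable_EFinP; apply: measurable_funM.
      exact: measurable_cst.
    exact: (measurable_indic mB).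
  - by apply/measurable_EFinP; apply: measurable_funB.
  - move=> x _; rewrite lee_fin indicE.
    have := le_trans (ler_norm (f x)) (fN x).
    case: (pselect (B x)) => Bx.
      rewrite mem_set // mulr1; move: Bx; rewrite /B /= in_itv /= => fx; lra.
    rewrite memNset // mulr0; lra.
have H3 : (\int[normal_prob 0 s]_t ((eta * N * \1_B t)%:E) =
           (eta * N)%:E * normal_prob 0 s B)%E.
  under eq_integral do rewrite EFinM.
  rewrite ge0_integralZl //=.
  all: try by [rewrite lee_fin mulr_ge0 // ltW | move=> x _; rewrite lee_fin indicE |
               apply/measurable_EFinP; exact: (measurable_indic mB)].
  by rewrite integral_indic // setIT.
pose I := `[- (2 * s), 2 * s]%classic.
pose J := `[- s, s]%classic.
have mI : measurable I by exact: measurable_itv.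
have mJ : measurable J by exact: measurable_itv.
have mBI : measurable (B `&` I) by exact: measurableI.
have HBI : (normal_prob 0 s (B `&` I) <= normal_prob 0 s B)%E.
  by apply: le_measure; rewrite ?inE //; exact: subIsetl.
have HL : ((expR (-2) / (4 * s))%:E * mu (B `&` I) <= normal_prob 0 s (B `&` I))%E.
  rewrite -integral_cst //.
  rewrite [X in (_ <= X)%E]/normal_prob.
  apply: ge0_le_integral => //.
  - by move=> x _; rewrite lee_fin ltW // divr_gt0 // ?expR_gt0 // mulr_gt0.
  - by apply/measurable_EFinP; apply: measurable_funTS; exact: measurable_normal_pdf.
  - move=> x [_ Ix]; rewrite lee_fin; apply: pdf_lb => //.
    by move: Ix; rewrite /I /= in_itv /= ler_norml.
have HI : (mu (B `&` I) <= mu I)%E.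
  by apply: le_measure; rewrite ?inE //; exact: subIsetr.
have Hge : (0 <= mu (B `&` I))%E := measure_ge0 _ _.
have mI' : mu I = ((2 * s) - - (2 * s))%:E.
  rewrite lebesgue_measure_itv /= lte_fin.
  have -> : (- (2 * s) < 2 * s) = true by apply/idP; lra.
  by rewrite EFinB.
rewrite mI' in HI.
move: Hge HI HL; case E: (mu (B `&` I)) => [x| |] Hge HI HL //.
have Hx : expR (-2) / (4 * s) * x * (eta * N) <= delta * N.
  rewrite -lee_fin.
  have : ((eta * N)%:E * ((expR (-2) / (4 * s))%:E * x%:E) <= (delta * N)%:E)%E.
    apply: le_trans (lee_wpmul2l _ (le_trans HL HBI)) _.
    - by rewrite lee_fin mulr_ge0 // ltW.
    - rewrite -H3; apply: le_trans H2 _; rewrite H1 lee_fin; lra.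
  by rewrite -!EFinM mulrC.
pose Bs := (fun y => y + t0) @^-1` (B `&` I).
have mBs : measurable Bs.
  rewrite /Bs -[X in measurable X]setTI.
  have mft : measurable_fun setT (fun y : R => y + t0) by apply: measurable_funD.
  by apply: mft.
have muBs : mu Bs = x%:E by rewrite /Bs lebesgue_shift.
case: (pselect (exists x, (1 - eta) * N <= f x /\ (1 - eta) * N <= f (x + t0))) => // nex.
exfalso.
have sub : J `<=` (B `&` I) `|` Bs.
  move=> y Jy.
  case: (pselect ((B `&` I) y)) => [h|h]; first by left.
  case: (pselect (Bs y)) => [h'|h']; first by right.
  exfalso; apply: nex; exists y.
  move: Jy t0s; rewrite /J /= in_itv /= ler_norml => /andP[y1 y2] /andP[t1 t2].
  have yI : I y by rewrite /I /= in_itv /=; apply/andP; split; lra.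
  have ytI : I (y + t0) by rewrite /I /= in_itv /=; apply/andP; split; lra.
  split.
  - rewrite leNgt; apply/negP => fy; apply: h; split => //.
  - rewrite leNgt; apply/negP => fy; apply: h'; split => //.
have : (mu J <= mu (B `&` I) + mu Bs)%E.
  have HU := measureU2 mu mBI mBs.
  have HJ : (mu J <= mu (B `&` I `|` Bs))%E.
    by apply: le_measure; rewrite ?inE //; exact: measurableU.
  exact: le_trans HJ HU.
rewrite lebesgue_measure_itv E muBs /= lte_fin.
have -> : (- s < s) = true by apply/idP; lra.
rewrite -EFinD lee_fin => Hs.
have k0 : 0 < expR (-2) / (4 * s) by rewrite divr_gt0 // ?expR_gt0 // mulr_gt0.
have e2 : 0 < expR (-2) :> R by exact: expR_gt0.
have ks : expR (-2) / (4 * s) * s = expR (-2) / 4 by field; lra.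
have : expR (-2) / (4 * s) * s * (eta * N) <= expR (-2) / (4 * s) * x * (eta * N).
  apply: ler_wpM2r; first by rewrite mulr_ge0 // ltW.
  apply: ler_wpM2l; first exact: ltW.
  lra.
rewrite ks => H4.
have H5 : delta * N <= eta * (expR (-2) / 4) / 2 * N by apply: ler_wpM2r => //; exact: ltW.
have H6 : 0 < eta * (expR (-2) / 4) * N by apply: mulr_gt0 => //; apply: mulr_gt0 => //; exact: divr_gt0.
nra.
Qed.

End Key.
Theorem proposition3p3 (R : realType) (E : completeNormedModType R) :
  uniformly_convex E ->
  forall eps : R, 0 < eps ->
  exists2 delta : R, 0 < delta &
    forall (rho : R -> E -> E), isometric_rep rho ->
    forall (a : R) (xi v : E), gauss_integral_of a (fun t => rho t xi) v ->
      (1 - delta) * `|xi| <= `|v| ->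
      forall t : R, `|t| <= expR a -> `|rho t xi - xi| <= eps * `|xi|.
Proof.
move=> UC eps e0.
pose e' := Num.min eps 2.
have e'0 : 0 < e' by rewrite lt_min e0 /=.
have e'2 : e' <= 2 by rewrite ge_min lexx orbT.
have e'e : e' <= eps by rewrite ge_min lexx.
have [du du0 Hdu] := UC e' e'0 e'2.
pose eta := du / 2.
have eta0 : 0 < eta by rewrite divr_gt0.
pose delta := eta * (expR (-2) / 4) / 2.
have delta0 : 0 < delta.
  by rewrite divr_gt0 // mulr_gt0 // divr_gt0 // expR_gt0.
exists delta => // rho [Hlin Hiso H0 Hadd Hcont] a xi v Hv Hnorm t0 ht0.
have rsub : forall t x y, rho t (x - y) = rho t x - rho t y.
  move=> t x y; have := Hlin t (-1) y x; rewrite !scaleN1r => H.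
  by rewrite [x - y]addrC H addrC.
have [->|xi0] := eqVneq xi 0.
  have r0 : rho t0 0 = 0 by apply/normr0_eq0; rewrite Hiso normr0.
  by rewrite r0 subrr !normr0 mulr0.
have N0 : 0 < `|xi| by rewrite normr_gt0.
have [l [llin lb lv]] := HB_exists v.
have llinear : linear (l : E -> R^o) by move=> k x y; rewrite llin.
have lsub : forall x y, l (x - y) = l x - l y.
  move=> x y; have := llin (-1) y x; rewrite scaleN1r mulN1r => H.
  by rewrite [x - y]addrC H addrC.
have l0 : l 0 = 0 by have := lsub 0 0; rewrite subrr => ->; rewrite subrr.
have lZ : forall k w, l (k *: w) = k * l w.
  by move=> k w; have := llin k w 0; rewrite !addr0 l0 addr0.
have lD : forall w1 w2, l (w1 + w2) = l w1 + l w2.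
  by move=> w1 w2; have := llin 1 w1 w2; rewrite scale1r mul1r.
have lcont : continuous l.
  move=> x; apply/(@cvgrPdist_lt _ _ _ (nbhs x) _ l (l x)) => e ep.
  have H := (@cvgrPdist_lt _ _ _ _ _ id x).1 cvg_id e ep.
  near=> y.
  rewrite -lsub; apply: le_lt_trans (lb _) _.
  near: y; exact: H.
have Hint := Hv l llinear lcont.
have fb : forall s, `|l (rho s xi)| <= `|xi|.
  by move=> s; rewrite -(Hiso s xi); exact: lb.
have fcont : continuous (fun s => l (rho s xi)).
  move=> s; apply: continuous_comp; [exact: Hcont | exact: lcont].
have sig0 : 0 < expR a := expR_gt0 a.
have Hr : (1 - delta) * `|xi| <= l v by rewrite lv.
have [s [h1 h2]] := key_pair sig0 N0 eta0 (ltW delta0) (lexx _) fcont fb Hint Hr ht0.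
pose N := `|xi|.
pose x := N^-1 *: rho s xi.
pose y := N^-1 *: rho (s + t0) xi.
have Ninv : 0 < N^-1 by rewrite invr_gt0.
have hx : `|x| = 1 by rewrite normrZ Hiso gtr0_norm // mulVf // gt_eqF.
have hy : `|y| = 1 by rewrite normrZ Hiso gtr0_norm // mulVf // gt_eqF.
have Hyx : `|y - x| = N^-1 * `|rho t0 xi - xi|.
  rewrite /x /y -scalerBr normrZ gtr0_norm // Hadd -rsub Hiso //.
have lt : `|x - y| < e'.
  rewrite ltNge; apply/negP => hge.
  have := Hdu x y hx hy hge.
  have : 1 - eta <= l (2^-1 *: (x + y)).
    rewrite lZ lD /x /y !lZ.
    have -> : 1 - eta = 2^-1 * (N^-1 * ((1 - eta) * N) + N^-1 * ((1 - eta) * N)).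
      by field; rewrite gt_eqF.
    rewrite ler_pM2l ?invr_gt0 //.
    by apply: lerD; rewrite ler_pM2l.
  have := le_trans (ler_norm (l (2^-1 *: (x + y)))) (lb (2^-1 *: (x + y))).
  rewrite /eta; lra.
rewrite distrC Hyx in lt.
have : `|rho t0 xi - xi| < e' * N.
  by rewrite -ltr_pdivrMr // mulrC.
move=> H; rewrite -/N; apply: ltW; apply: lt_le_trans H _.
by rewrite ler_wpM2r // ltW.
Unshelve. all: by end_near.
Qed.
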